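(* For all integers $n,k,r$ with $0\le k\le n-2$ and $1\le r\le n$, $$\frac{k+1}{n-k-1}\sum_i\binom{k}{i}\binom{n-k+i-1}{r}\binom{n-i-1}{n-r}=\frac{k+1}{r}\sum_j(-1)^j\frac{\binom{k}{j}\binom{k-j}{j}\binom{n-j-2}{r-1}\binom{n-j-1}{r-j-1}}{\binom{n-j-2}{j}},$$ where the left sum is over integers $0\le i\le k$ and the right sum over integers $0\le j\le k/2$.
   Context: Binomial coefficients $\binom{a}{b}$ with $a\ge 0$ are $0$ if $b<0$ or $b>a$. *)

(* Defs.v *)
From mathcomp Require Import all_boot all_order all_algebra.
Set Implicit Arguments. Unset Strict Implicit. Unset Printing Implicit Defensive.
Import Order.TTheory GRing.Theory Num.Theory.
Local Open Scope ring_scope.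

Definition binom (a b : int) : rat :=
  if (0 <= b) && (b <= a) then ('C(`|a|%N, `|b|%N))%:R else 0.

(* Main.v *)
Require Import Defs.
From mathcomp Require Import all_boot all_order all_algebra.
From mathcomp Require Import ring lra zify.
Import Order.TTheory GRing.Theory Num.Theory.
Local Open Scope ring_scope.

Lemma binomN (A B : nat) : binom A B = ('C(A, B))%:R.
Proof.
rewrite /binom !lez_nat /=; case: leqP => // h.
by rewrite bin_small.
Qed.

Lemma binom_neg (a b : int) : b < 0 -> binom a b = 0.
Proof. by rewrite /binom; case: (leP 0 b) => //. Qed.

Lemma binom_gt (a b : int) : a < b -> binom a b = 0.
Proof. by rewrite /binom => h; rewrite (lt_geF h) andbF. Qed.

Lemma binom_nega (a b : int) : a < 0 -> binom a b = 0.
Proof.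
move=> ha; rewrite /binom; case: (leP 0 b) => hb //=.
by rewrite (lt_geF (lt_le_trans ha hb)).
Qed.

Lemma binom_nz (a b : int) : 0 <= b -> b <= a -> binom a b != 0.
Proof.
move=> h1 h2; rewrite /binom h1 h2 /= pnatr_eq0 -lt0n bin_gt0.
case: a h2 => A; case: b h1 => B //=; by rewrite lez_nat.
Qed.

Lemma natzR (n : nat) : (n%:Z)%:~R = n%:R :> rat.
Proof. by []. Qed.

Lemma L1 (a b : int) : b%:~R * binom a b = (a - b + 1)%:~R * binom a (b - 1).
Proof.
case: a => [A|A]; last by rewrite !binom_nega ?mulr0.
case: b => [[|B]|B].
- by rewrite mul0r binom_neg ?mulr0.
- have -> : (B.+1%:Z - 1 = B%:Z) by lia.
  rewrite !binomN natzR.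
  case: (ltnP B A) => h.
  + have -> : (A%:Z - B.+1%:Z + 1 = (A - B)%N%:Z) by lia.
    by rewrite natzR -!natrM mul_bin_left.
  + rewrite (@bin_small A B.+1) ?ltnS // mulr0.
    case: (ltnP A B) => h2; first by rewrite bin_small ?mulr0.
    have -> : (A%:Z - B.+1%:Z + 1 = 0) by lia.
    by rewrite mul0r.
- by rewrite !binom_neg ?mulr0.
Qed.

Lemma L2 (a b : int) : (a - b)%:~R * binom a b = a%:~R * binom (a - 1) b.
Proof.
case: a => [[|A]|A]; last by rewrite !binom_nega ?mulr0 ?mul0r.
- case: b => [[|B]|B].
  + by rewrite mul0r mul0r.
  + by rewrite binom_gt ?mulr0 ?mul0r.
  + by rewrite binom_neg ?mulr0 ?mul0r.
- have -> : (A.+1%:Z - 1 = A%:Z) by lia.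
  case: b => [B|B]; last by rewrite !binom_neg ?mulr0.
  rewrite !binomN natzR.
  case: (leqP B A.+1) => h.
  + have -> : (A.+1%:Z - B%:Z = (A.+1 - B)%N%:Z) by lia.
    by rewrite natzR -!natrM -mul_bin_down.
  + by rewrite !bin_small ?mulr0 // ltnW.
Qed.

Lemma L3 (a b : int) : b%:~R * binom a b = a%:~R * binom (a - 1) (b - 1).
Proof.
case: a => [[|A]|A]; last by rewrite !binom_nega ?mulr0 ?mul0r.
- case: b => [[|B]|B].
  + by rewrite !mul0r.
  + by rewrite binom_gt ?mulr0 ?mul0r.
  + by rewrite binom_neg ?mulr0 ?mul0r.
- have -> : (A.+1%:Z - 1 = A%:Z) by lia.
  case: b => [[|B]|B].
  + by rewrite mul0r binom_neg ?mulr0.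
  + have -> : (B.+1%:Z - 1 = B%:Z) by lia.
    by rewrite !binomN !natzR -!natrM mul_bin_diag.
  + by rewrite !binom_neg ?mulr0.
Qed.

Lemma Pasc (a b : int) : 0 <= a -> binom (a + 1) b = binom a b + binom a (b - 1).
Proof.
case: a => [A|A] // _.
have -> : (A%:Z + 1 = A.+1%:Z) by lia.
case: b => [[|B]|B].
- by rewrite (@binom_neg _ (0 - 1)) // !binomN !bin0 addr0.
- have -> : (B.+1%:Z - 1 = B%:Z) by lia.
  by rewrite !binomN binS natrD.
- by rewrite !binom_neg ?addr0.
Qed.

Definition sL (n k r : int) (i : nat) : rat :=
  binom k i%:Z * binom (n - k + i%:Z - 1) r * binom (n - i%:Z - 1) (n - r).
Definition GL (n k r : int) (i : nat) : rat :=
  - (n - k - 1)%:~R * binom (k - 1) (i%:Z - 1) * binom (n - k + i%:Z - 1) r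
    * binom (n - i%:Z - 1) (n - r).

Lemma algL (X q c2 c3 r s a Nn x y P Q Y1 Y0 : rat) :
  r*P = (a - r + 1)*Q -> s*Y1 = (Nn - s + 1)*Y0 ->
  c2 = -2*r - q -> c3 = -2*s - q -> a - r + 1 + Nn - s + 1 = q ->
  X = q*((x+y)*P*(Y1+Y0) - 2*(x*(P+Q)*(Y1+Y0))) - c2*(x*P*Y0) - c3*(x*Q*Y1)
    - ((-q*x*(P+Q)*Y1) - (-q*y*P*(Y1+Y0))) ->
  X = 0.
Proof.
move=> h1 h2 h3 h4 h5 ->; rewrite h3 h4 -h5.
transitivity (x*(2*Y0*(r*P - (a-r+1)*Q) + 2*Q*(s*Y1 - (Nn-s+1)*Y0))); first ring.
by rewrite h1 h2 !subrr; ring.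
Qed.

Lemma termL (n k r : int) (i : nat) : 1 <= k -> k + 2 <= n -> i%:Z <= k ->
  (n - k - 1)%:~R * (sL n k r i - 2 * sL n (k - 1) r i)
  - (k + 1 - 2 * r - n)%:~R * sL (n - 1) (k - 1) r i
  - (k + 1 + 2 * r - 3 * n)%:~R * sL (n - 1) (k - 1) (r - 1) i
  = GL n k r i.+1 - GL n k r i.
Proof.
move=> hk hn hi.
apply/eqP; rewrite -subr_eq0; apply/eqP.
rewrite /sL /GL.
have e1 : k = (k - 1) + 1 by ring.
have e2 : n - (k - 1) + i%:Z - 1 = (n - k + i%:Z - 1) + 1 by ring.
have e3 : n - i%:Z - 1 = (n - i%:Z - 2) + 1 by ring.
have e4 : n - 1 - (k - 1) + i%:Z - 1 = n - k + i%:Z - 1 by ring.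
have e5 : n - 1 - i%:Z - 1 = n - i%:Z - 2 by ring.
have e6 : n - 1 - r = n - r - 1 by ring.
have e7 : n - 1 - (r - 1) = n - r by ring.
have e8 : (i.+1)%:Z - 1 = i%:Z by lia.
have e9 : n - k + (i.+1)%:Z - 1 = (n - k + i%:Z - 1) + 1 by lia.
have e10 : n - (i.+1)%:Z - 1 = n - i%:Z - 2 by lia.
rewrite e2 e4 e5 e6 e7 e8 e9 e10 e3.
rewrite [in binom k _]e1.
have a0 : 0 <= n - k + i%:Z - 1 by lia.
have a1 : 0 <= n - i%:Z - 2 by lia.
have a2 : 0 <= k - 1 by lia.
rewrite !Pasc //.
apply: (@algL _ (n - k - 1)%:~R (k + 1 - 2 * r - n)%:~R (k + 1 + 2 * r - 3 * n)%:~R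
   r%:~R (n - r)%:~R (n - k + i%:Z - 1)%:~R (n - i%:Z - 2)%:~R
   (binom (k - 1) i) (binom (k - 1) (i%:Z - 1)) (binom (n - k + i%:Z - 1) r)
   (binom (n - k + i%:Z - 1) (r - 1)) (binom (n - i%:Z - 2) (n - r))
   (binom (n - i%:Z - 2) (n - r - 1))).
- by rewrite L1; congr (_ * _); ring.
- by rewrite L1; congr (_ * _); ring.
- ring.
- ring.
- ring.
- ring.
Qed.

Lemma algR (n k r j ss bk bkj bk1 bk1j bk5 bkj5 D D3 D5 F1 F3 A Z1 C1 C0 : rat) :
  (k-j)*bk = k*bk1 ->
  (k-j-j)*bkj = (k-j)*bk1j ->
  (j+1)*bk5 = (k-j)*bk ->
  (j+1)*bkj5 = (k-j-1-j)*bk1j ->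
  (n-j-2)*D3 = (n-j-2-j)*D ->
  (j+1)*D5 = (n-j-2-1-j)*D3 ->
  (r-1)*F1 = (n-j-2)*A ->
  (r-1)*F3 = (n-j-2-r+1)*A ->
  Z1 = C1 + C0 ->
  (r-j-1)*C1 = (n-r)*C0 ->
  k != 0 -> k - j != 0 -> j + 1 != 0 -> n-j-2 != 0 -> r - 1 != 0 -> n - r != 0 -> D != 0 ->
  (k = j + j \/ (k = j + j + 1 /\ n-j-2-j != 0) \/ (n-j-2-j != 0 /\ n-j-2-1-j != 0)) ->
  (r-1)*((n-k-1)*(ss*(bk*bkj*F1*Z1)/D) - 2*(n-k-1+1)*(ss*(bk1*bk1j*F1*Z1)/D)
     - (k+1-2*r-n)*(ss*(bk1*bk1j*F3*C1)/D3)) - r*(k+1+2*r-3*n)*(ss*(bk1*bk1j*A*C0)/D3)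
  = 2*(r-1)*(2*(j+1)-n+1)*((j+1)/k)*(-ss*(bk5*bkj5*F3*C0)/D5)
    - 2*(r-1)*(2*j-n+1)*(j/k)*(ss*(bk*bkj*F1*Z1)/D).
Proof.
move=> h1 h2 h3 h4 h5 h6 h7 h8 h9 h10 k0 kj0 j0 m0 r0 nr0 D0 hc.
have e1 : bk1 = (k-j)*bk/k by rewrite h1; field.
have e3 : bk5 = (k-j)*bk/(j+1) by rewrite -h3; field.
have e7 : F1 = (n-j-2)*A/(r-1) by rewrite -h7; field.
have e8 : F3 = (n-j-2-r+1)*A/(r-1) by rewrite -h8; field.
have e10 : C0 = (r-j-1)*C1/(n-r) by rewrite h10; field.
have e2 : bk1j = (k-j-j)*bkj/(k-j) by rewrite h2; field.
have e4 : bkj5 = (k-j-1-j)*bk1j/(j+1) by rewrite -h4; field.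
rewrite e1 e3 e7 e8 h9 e10 e4 e2.
case: hc => [hk|[[hk hm1]|[hm1 hm2]]].
- rewrite hk; rewrite hk in k0.
  have -> : j + j - j - j = 0 by ring.
  rewrite !(mulr0, mul0r, subr0, oppr0, add0r, addr0).
  field. by rewrite D0 nr0 r0 k0.
- rewrite hk; rewrite hk in k0.
  have -> : j + j + 1 - j - 1 - j = 0 by ring.
  rewrite !(mulr0, mul0r, subr0, oppr0, add0r, addr0).
  have e5 : D3 = (n-j-2-j)*D/(n-j-2) by rewrite -h5; field.
  rewrite e5. field. by rewrite D0 nr0 r0 k0 m0 hm1 -hk kj0.
- have e5 : D3 = (n-j-2-j)*D/(n-j-2) by rewrite -h5; field.
  have e6 : D5 = (n-j-2-1-j)*D3/(j+1) by rewrite -h6; field.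
  rewrite e6 e5. field. by rewrite D0 nr0 r0 k0 j0 m0 hm1 hm2 kj0.
Qed.

Definition uR (n k r : int) (j : nat) : rat :=
  (-1) ^+ j * (binom k j%:Z * binom (k - j%:Z) j%:Z * binom (n - j%:Z - 2) (r - 1)
    * binom (n - j%:Z - 1) (r - j%:Z - 1)) / binom (n - j%:Z - 2) j%:Z.
Definition GR (n k r : int) (j : nat) : rat :=
  2 * (r - 1)%:~R * (2 * j%:R - n%:~R + 1) * (j%:R / k%:~R) * uR n k r j.

Lemma relP (c d c' d' x y x' y' : rat) : c' * x' = d' * y' -> c = c' -> d = d' ->
  x = x' -> y = y' -> c * x = d * y.
Proof. by move=> h -> -> -> ->. Qed.
Arguments relP {c d c' d' x y x' y'}.

Lemma nzc (z : int) (x : rat) : x = z%:~R -> z != 0 -> x != 0.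
Proof. by move=> -> hz; rewrite intr_eq0. Qed.

Lemma termR (n k r : int) (j : nat) : 1 <= k -> k + 2 <= n -> 2 <= r -> r <= n - 1 ->
  (r - 1)%:~R * ((n - k - 1)%:~R * uR n k r j - 2 * (n - k)%:~R * uR n (k - 1) r j
     - (k + 1 - 2 * r - n)%:~R * uR (n - 1) (k - 1) r j)
  - r%:~R * (k + 1 + 2 * r - 3 * n)%:~R * uR (n - 1) (k - 1) (r - 1) j
  = GR n k r j.+1 - GR n k r j.
Proof.
move=> hk hn hr1 hr2.
rewrite /GR /uR.
have r1 : k - 1 - j%:Z = k - j%:Z - 1 by ring.
have r2 : n - 1 - j%:Z - 2 = n - j%:Z - 3 by ring.
have r3 : n - 1 - j%:Z - 1 = n - j%:Z - 2 by ring.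
have r4 : r - 1 - 1 = r - 2 by ring.
have r5 : r - 1 - j%:Z - 1 = r - j%:Z - 2 by ring.
have r6 : (j.+1)%:Z = j%:Z + 1 by lia.
have r7 : k - (j%:Z + 1) = k - j%:Z - 1 by ring.
have r8 : n - (j%:Z + 1) - 2 = n - j%:Z - 3 by ring.
have r9 : n - (j%:Z + 1) - 1 = n - j%:Z - 2 by ring.
have r10 : r - (j%:Z + 1) - 1 = r - j%:Z - 2 by ring.
rewrite r1 r2 r3 r4 r5 r6 r7 r8 r9 r10.
case: (leP (2 * j%:Z) k) => hj; last first.
  rewrite (@binom_gt (k - j%:Z) j%:Z); last by lia.
  rewrite (@binom_gt (k - j%:Z - 1) j%:Z); last by lia.
  rewrite (@binom_gt (k - j%:Z - 1) (j%:Z + 1)); last by lia.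
  by rewrite !(mulr0, mul0r, subr0, subrr).
have r11 : n - j%:Z - 1 = (n - j%:Z - 2) + 1 by ring.
have r12 : r - j%:Z - 1 - 1 = r - j%:Z - 2 by ring.
rewrite r11 Pasc; last by lia.
rewrite r12 exprS.
have E := @algR n%:~R k%:~R r%:~R j%:R ((-1) ^+ j)
  (binom k j) (binom (k - j%:Z) j) (binom (k - 1) j) (binom (k - j%:Z - 1) j)
  (binom k (j%:Z + 1)) (binom (k - j%:Z - 1) (j%:Z + 1))
  (binom (n - j%:Z - 2) j) (binom (n - j%:Z - 3) j) (binom (n - j%:Z - 3) (j%:Z + 1))
  (binom (n - j%:Z - 2) (r - 1)) (binom (n - j%:Z - 3) (r - 1)) (binom (n - j%:Z - 3) (r - 2))
  (binom (n - j%:Z - 2) (r - j%:Z - 1) + binom (n - j%:Z - 2) (r - j%:Z - 2))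
  (binom (n - j%:Z - 2) (r - j%:Z - 1)) (binom (n - j%:Z - 2) (r - j%:Z - 2)).
apply: (etrans _ (etrans (E _ _ _ _ _ _ _ _ _ _ _ _ _ _ _ _ _ _) _)).
- ring.
- by eapply relP; [exact: (L2 k j)|ring|ring|ring|ring].
- by eapply relP; [exact: (L2 (k - j%:Z) j)|ring|ring|ring|ring].
- by eapply relP; [exact: (L1 k (j%:Z + 1))|ring|ring|ring|congr binom; ring].
- by eapply relP; [exact: (L1 (k - j%:Z - 1) (j%:Z + 1))|ring|ring|ring|congr binom; ring].
- by eapply relP; [exact: (esym (L2 (n - j%:Z - 2) j))|ring|ring|congr binom; ring|ring].
- by eapply relP; [exact: (L1 (n - j%:Z - 3) (j%:Z + 1))|ring|ring|ring|congr binom; ring].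
- by eapply relP; [exact: (L3 (n - j%:Z - 2) (r - 1))|ring|ring|ring|congr binom; ring].
- by eapply relP; [exact: (L1 (n - j%:Z - 3) (r - 1))|ring|ring|ring|congr binom; ring].
- by [].
- by eapply relP; [exact: (L1 (n - j%:Z - 2) (r - j%:Z - 1))|ring|ring|ring|congr binom; ring].
- by apply: (@nzc k); [ring|clear -hk hn hr1 hr2 hj; lia].
- by apply: (@nzc (k - j%:Z)); [ring|clear -hk hn hr1 hr2 hj; lia].
- by apply: (@nzc (j%:Z + 1)); [ring|clear -hk hn hr1 hr2 hj; lia].
- by apply: (@nzc (n - j%:Z - 2)); [ring|clear -hk hn hr1 hr2 hj; lia].
- by apply: (@nzc (r - 1)); [ring|clear -hk hn hr1 hr2 hj; lia].
- by apply: (@nzc (n - r)); [ring|clear -hk hn hr1 hr2 hj; lia].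
- by apply: binom_nz; clear -hk hn hr1 hr2 hj; lia.
- have : (k = 2 * j%:Z) \/ (k = 2 * j%:Z + 1) \/ (2 * j%:Z + 2 <= k) by clear -hj; lia.
  case=> [hk'|[hk'|hk']].
  + by left; rewrite hk'; ring.
  + right; left; split; first by rewrite hk'; ring.
    by apply: (@nzc (n - j%:Z - 2 - j%:Z)); [ring|clear -hk hn hr1 hr2 hj hk'; lia].
  + right; right; split.
    * by apply: (@nzc (n - j%:Z - 2 - j%:Z)); [ring|clear -hk hn hr1 hr2 hj hk'; lia].
    * by apply: (@nzc (n - j%:Z - 2 - 1 - j%:Z)); [ring|clear -hk hn hr1 hr2 hj hk'; lia].
- ring.
Qed.

Definition SL (n k r : int) : rat := \sum_(0 <= i < (`|k|%N).+1) sL n k r i.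
Definition UR (n k r : int) : rat := \sum_(0 <= j < ((`|k|%N)./2).+1) uR n k r j.

Lemma ext_sum (F : nat -> rat) (a M : nat) : (a <= M)%N -> (forall i, (a <= i)%N -> F i = 0) ->
  \sum_(0 <= i < a) F i = \sum_(0 <= i < M) F i.
Proof.
move=> hM h; symmetry; rewrite (big_cat_nat (leq0n a) hM) /=.
rewrite [X in _ + X]big_nat_cond [X in _ + X]big1 ?addr0 //.
by move=> i /andP [/andP [hi _] _]; exact: h.
Qed.

Lemma SL_ext (K M : nat) (n r : int) : (K < M)%N -> SL n K r = \sum_(0 <= i < M) sL n K r i.
Proof.
move=> hM; rewrite /SL /=; apply: ext_sum => // i hi.
by rewrite /sL binom_gt ?mul0r //; lia.
Qed.

Lemma UR_ext (K M : nat) (n r : int) : (K./2 < M)%N -> UR n K r = \sum_(0 <= j < M) uR n K r j.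
Proof.
move=> hM; rewrite /UR /=; apply: ext_sum => // j hj.
have hj' : (K < j.*2)%N by rewrite -ltn_half_double.
rewrite -addnn in hj'.
rewrite /uR (@binom_gt (K%:Z - j%:Z) j); last by lia.
by rewrite !(mulr0, mul0r).
Qed.

Lemma Srec (K : nat) (n r : int) : K.+1%:Z + 2 <= n ->
  (n - K.+1%:Z - 1)%:~R * (SL n K.+1 r - 2 * SL n K r)
  - (K.+1%:Z + 1 - 2 * r - n)%:~R * SL (n - 1) K r
  - (K.+1%:Z + 1 + 2 * r - 3 * n)%:~R * SL (n - 1) K (r - 1) = 0.
Proof.
move=> hn.
rewrite !(@SL_ext K K.+2) // (@SL_ext K.+1 K.+2) //.
have e : K.+1%:Z - 1 = K%:Z by lia.
have H : \sum_(0 <= i < K.+2) ((n - K.+1%:Z - 1)%:~R * (sL n K.+1 r i - 2 * sL n K r i)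
  - (K.+1%:Z + 1 - 2 * r - n)%:~R * sL (n - 1) K r i
  - (K.+1%:Z + 1 + 2 * r - 3 * n)%:~R * sL (n - 1) K (r - 1) i)
  = \sum_(0 <= i < K.+2) (GL n K.+1 r i.+1 - GL n K.+1 r i).
  apply: eq_big_nat => i /andP [_ hi].
  have := @termL n K.+1 r i; rewrite e; apply; lia.
rewrite telescope_sumr // in H.
have G0 : GL n K.+1 r 0 = 0 by rewrite /GL binom_neg ?mulr0 ?mul0r //.
have G1 : GL n K.+1 r K.+2 = 0.
  by rewrite /GL e binom_gt ?mulr0 ?mul0r //; lia.
rewrite G0 G1 subrr in H.
apply: etrans _ H.
by rewrite !sumrB -!mulr_sumr !sumrB -!mulr_sumr.
Qed.

Lemma Urec (K : nat) (n r : int) : K.+1%:Z + 2 <= n -> 2 <= r -> r <= n - 1 ->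
  (r - 1)%:~R * ((n - K.+1%:Z - 1)%:~R * UR n K.+1 r - 2 * (n - K.+1%:Z)%:~R * UR n K r
     - (K.+1%:Z + 1 - 2 * r - n)%:~R * UR (n - 1) K r)
  - r%:~R * (K.+1%:Z + 1 + 2 * r - 3 * n)%:~R * UR (n - 1) K (r - 1) = 0.
Proof.
move=> hn hr1 hr2.
have hK1 : (K./2 < K.+2)%N.
  by rewrite ltn_half_double -addnn; lia.
have hK2 : (K.+1./2 < K.+2)%N.
  by rewrite ltn_half_double -addnn; lia.
rewrite !(@UR_ext K K.+2) // (@UR_ext K.+1 K.+2) //.
have e : K.+1%:Z - 1 = K%:Z by lia.
have H : \sum_(0 <= j < K.+2) ((r - 1)%:~R * ((n - K.+1%:Z - 1)%:~R * uR n K.+1 r j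
     - 2 * (n - K.+1%:Z)%:~R * uR n K r j
     - (K.+1%:Z + 1 - 2 * r - n)%:~R * uR (n - 1) K r j)
  - r%:~R * (K.+1%:Z + 1 + 2 * r - 3 * n)%:~R * uR (n - 1) K (r - 1) j)
  = \sum_(0 <= j < K.+2) (GR n K.+1 r j.+1 - GR n K.+1 r j).
  apply: eq_big_nat => j /andP [_ hj].
  have := @termR n K.+1 r j; rewrite e; apply; lia.
rewrite telescope_sumr // in H.
have G0 : GR n K.+1 r 0 = 0 by rewrite /GR mul0r !(mulr0, mul0r).
have G1 : GR n K.+1 r K.+2 = 0.
  rewrite /GR /uR (@binom_gt (K.+1%:Z - K.+2%:Z) K.+2); last by lia.
  by rewrite !(mulr0, mul0r).
rewrite G0 G1 subrr in H.
apply: etrans _ H.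
by rewrite !sumrB -!mulr_sumr !sumrB -!mulr_sumr.
Qed.

Lemma binom0 (a : int) : 0 <= a -> binom a 0 = 1.
Proof. by case: a => // A _; rewrite (binomN A 0) bin0. Qed.

Lemma binom1 (a : int) : 0 <= a -> binom a 1 = a%:~R.
Proof. by case: a => // A _; rewrite (binomN A 1) bin1. Qed.

Lemma binomnn (a : int) : 0 <= a -> binom a a = 1.
Proof. by case: a => // A _; rewrite binomN binn. Qed.

Lemma binom_sym (a b : int) : 0 <= a -> binom a b = binom a (a - b).
Proof.
case: a => // A _.
case: (ltP b 0) => hb.
  by rewrite binom_neg // binom_gt //; lia.
case: (ltP A%:Z b) => hb2.
  by rewrite binom_gt // binom_neg //; lia.
case: b hb hb2 => // B _ hB.
have -> : A%:Z - B%:Z = (A - B)%N%:Z by lia.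
by rewrite !binomN bin_sub //; lia.
Qed.

Lemma SL_r1 (K : nat) (n : int) : K%:Z + 2 <= n -> SL n K 1 = (n - K%:Z - 1)%:~R.
Proof.
move=> hn; rewrite /SL /= big_nat_recl // big1 ?addr0.
  rewrite /sL.
  have -> : n - K%:Z + 0%:Z - 1 = n - K%:Z - 1 by ring.
  have -> : n - 0%:Z - 1 = n - 1 by ring.
  rewrite binom0 // binom1; last by lia.
  by rewrite binomnn ?mul1r ?mulr1 //; lia.
move=> i _; rewrite /sL (@binom_gt (n - i.+1%:Z - 1) (n - 1)) ?mulr0 //; lia.
Qed.

Lemma UR_r1 (K : nat) (n : int) : K%:Z + 2 <= n -> UR n K 1 = 1.
Proof.
move=> hn; rewrite /UR /= big_nat_recl // big1 ?addr0.
  rewrite /uR expr0 mul1r.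
  have -> : K%:Z - 0%:Z = K%:Z by ring.
  have -> : n - 0%:Z - 2 = n - 2 by ring.
  have -> : n - 0%:Z - 1 = n - 1 by ring.
  have -> : (1 : int) - 0%:Z - 1 = 0 by ring.

  rewrite !binom0 //; try lia.
move=> j _; rewrite /uR (@binom_neg _ (1 - j.+1%:Z - 1)); last by lia.
by rewrite !(mulr0, mul0r).
Qed.

Lemma SL_rn (K : nat) (n : int) : K%:Z + 2 <= n -> SL n K n = 0.
Proof.
move=> hn; rewrite /SL /= big_nat_cond big1 // => i /andP [/andP [_ hi] _].
by rewrite /sL (@binom_gt _ n) ?mulr0 ?mul0r //; lia.
Qed.

Lemma UR_rn (K : nat) (n : int) : K%:Z + 2 <= n -> UR n K n = 0.
Proof.
move=> hn; rewrite /UR /= big1 // => j _.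
rewrite /uR (@binom_gt (n - j%:Z - 2) (n - 1)); last by lia.
by rewrite !(mulr0, mul0r).
Qed.

Lemma fin (q c2 c3 r S1 S2 S3 S4 U1 U2 U3 U4 : rat) : q != 0 -> r != 0 -> r - 1 != 0 ->
  q*(S1 - 2*S2) - c2*S3 - c3*S4 = 0 -> S2 = (q+1)/r*U2 -> S3 = q/r*U3 -> S4 = q/(r-1)*U4 ->
  (r-1)*(q*U1 - 2*(q+1)*U2 - c2*U3) - r*c3*U4 = 0 -> S1 = q/r*U1.
Proof.
move=> q0 r0 r10 hS h2 h3 h4 hU.
have h : q*S1 = 2*q*S2 + c2*S3 + c3*S4 by rewrite -[LHS]subr0 -hS; ring.
have eS : S1 = (2*q*S2 + c2*S3 + c3*S4)/q by rewrite -h; field.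
have hu : (r-1)*q*U1 = (r-1)*(2*(q+1)*U2 + c2*U3) + r*c3*U4.
  by rewrite -[LHS]subr0 -hU; ring.
have eU : U1 = ((r-1)*(2*(q+1)*U2 + c2*U3) + r*c3*U4)/((r-1)*q).
  by rewrite -hu; field; rewrite q0 r10.
rewrite eS h2 h3 h4 eU; field.
by rewrite q0 r0 r10.
Qed.

Lemma mainL (K : nat) : forall n r : int, K%:Z + 2 <= n -> 1 <= r -> r <= n ->
  SL n K r = (n - K%:Z - 1)%:~R / r%:~R * UR n K r.
Proof.
elim: K => [|K IH] n r hn hr1 hrn.
- rewrite /SL /UR /= !big_nat1 /sL /uR expr0 mul1r.
  have -> : n - 0%:Z + 0%:Z - 1 = n - 1 by ring.
  have -> : n - 0%:Z - 1 = n - 1 by ring.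
  have -> : n - 0%:Z - 2 = n - 2 by ring.
  have -> : (0%:Z - 0%:Z : int) = 0 by ring.
  have -> : r - 0%:Z - 1 = r - 1 by ring.
  rewrite (@binom_sym (n - 1) (n - r)); last by lia.
  have -> : n - 1 - (n - r) = r - 1 by ring.
  have h := L3 (n - 1) r.
  rewrite (_ : n - 1 - 1 = n - 2) in h; last by ring.
  have r0 : r%:~R != 0 :> rat by apply: (@nzc r); [ring|lia].
  have -> : binom (n - 1) r = (n - 1)%:~R * binom (n - 2) (r - 1) / r%:~R.
    by rewrite -h; field.
  rewrite !binom0 //; try lia.
  by field.
- have [->|hr1'] := eqVneq r 1.
    by rewrite SL_r1 // UR_r1 //; field.
  have [->|hrn'] := eqVneq r n.
    by rewrite SL_rn // UR_rn // mulr0.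
  have hr2 : 2 <= r by lia.
  have hrn2 : r <= n - 1 by lia.
  apply: (@fin (n - K.+1%:Z - 1)%:~R (K.+1%:Z + 1 - 2 * r - n)%:~R
     (K.+1%:Z + 1 + 2 * r - 3 * n)%:~R r%:~R
     (SL n K.+1 r) (SL n K r) (SL (n - 1) K r) (SL (n - 1) K (r - 1))
     (UR n K.+1 r) (UR n K r) (UR (n - 1) K r) (UR (n - 1) K (r - 1))).
  + by apply: (@nzc (n - K.+1%:Z - 1)); [ring|lia].
  + by apply: (@nzc r); [ring|lia].
  + by apply: (@nzc (r - 1)); [ring|lia].
  + exact: Srec.
  + by rewrite IH //; try lia; congr (_ / _ * _); ring.
  + by rewrite IH //; try lia; congr (_ / _ * _); ring.
  + by rewrite IH //; try lia; congr (_ / _ * _); ring.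
  + by apply: etrans _ (Urec K n r hn hr2 hrn2); ring.
Qed.

Theorem theorem1 (n k r : int)
  (hk0 : 0 <= k) (hkn : k <= n - 2) (hr1 : 1 <= r) (hrn : r <= n) :
  (k + 1)%:~R / (n - k - 1)%:~R *
    (\sum_(0 <= i < (`|k|%N).+1)
       binom k i%:Z * binom (n - k + i%:Z - 1) r * binom (n - i%:Z - 1) (n - r))
  =
  (k + 1)%:~R / r%:~R *
    (\sum_(0 <= j < ((`|k|%N)./2).+1)
       (-1) ^+ j * (binom k j%:Z * binom (k - j%:Z) j%:Z
                    * binom (n - j%:Z - 2) (r - 1) * binom (n - j%:Z - 1) (r - j%:Z - 1))
       / binom (n - j%:Z - 2) j%:Z).
Proof.
case: k hk0 hkn => // K _ hkn.
have := @mainL K n r; rewrite /SL /UR /sL /uR => ->; try lia.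
have q0 : (n - K%:Z - 1)%:~R != 0 :> rat by apply: (@nzc (n - K%:Z - 1)); [ring|lia].
rewrite mulrA; congr (_ * _).
have r0 : r%:~R != 0 :> rat by apply: (@nzc r); [ring|lia].
field; rewrite r0 /=; apply: (@nzc (n - K%:Z - 1)); [ring|lia].
Qed.
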